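(* Let $\mathrm F\colon\mathcal A\rightleftarrows\mathcal B\colon\mathrm U$ be an adjunction (unit $\eta$, counit $\varepsilon$), $\mathbb T=(\mathrm{FU},\mathrm F\eta\mathrm U,\varepsilon)$, $\mathbb C$ a comonad on $\mathcal A$, $\mathbb S$ a comonad on $\mathcal B$ lifting $\mathbb C$ via a natural isomorphism $\Omega\colon\mathrm{CU}\Rightarrow\mathrm{US}$ with $(\mathrm U,\Omega)$ a lax morphism of comonads from $\mathbb C$ to $\mathbb S$, $\Lambda=\varepsilon\mathrm{SF}\circ\mathrm F\Omega\mathrm F\circ\mathrm{FC}\eta$ its mate and $\chi=\Lambda\mathrm U\circ\mathrm F\Omega^{-1}\colon\mathrm{TS}\Rightarrow\mathrm{ST}$. Let $\mathrm V\colon\mathcal C\rightleftarrows\mathcal B\colon\mathrm G$ be an adjunction (unit $\eta'$, counit $\varepsilon'$) with $\mathrm S=\mathrm{VG}$, $\Delta^{\mathbb S}=\mathrm V\eta'\mathrm G$, $\varepsilon^{\mathbb S}=\varepsilon'$; let $\mathbb Q$ be a comonad on $\mathcal C$ with a natural isomorphism $\tilde\Omega\colon\mathrm{QG}\Rightarrow\mathrm{GT}$ such that $(\mathrm G,\tilde\Omega)$ is a lax isomorphism of comonads from $\mathbb Q$ to $\mathbb T$, and assume its mate $\tilde\Lambda=\varepsilon'\mathrm{TV}\circ\mathrm V\tilde\Omega\mathrm V\circ\mathrm{VQ}\eta'\colon\mathrm{VQ}\Rightarrow\mathrm{TV}$ is invertible. Put $\psi=\tilde\Lambda\mathrm G\circ\mathrm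 V\tilde\Omega^{-1}$. Let $\mathrm K\colon\mathcal A\to\mathcal C$ be a functor with $\mathrm{VK}=\mathrm F$ (strictly) which is an equivalence, with quasi-inverse $\bar{\mathrm K}$, and let $\xi\colon\mathrm K\bar{\mathrm K}\Rightarrow\mathrm{id}_{\mathcal C}$ and $\phi\colon\mathrm{id}_{\mathcal A}\Rightarrow\bar{\mathrm K}\mathrm K$ be the (invertible) counit and unit of an adjunction $\mathrm K\dashv\bar{\mathrm K}$. Let $\overline{\mathbb Q}$ be the comonad on $\mathcal A$ with underlying functor $\bar{\mathrm K}\mathrm Q\mathrm K$, comultiplication $\bar{\mathrm K}\mathrm Q\xi^{-1}\mathrm Q\mathrm K\circ\bar{\mathrm K}\Delta^{\mathbb Q}\mathrm K$ and counit $\phi^{-1}\circ\bar{\mathrm K}\varepsilon^{\mathbb Q}\mathrm K$. If $\chi=\psi^{-1}$, then for every category $\mathcal Z$ and functor $\mathrm N\colon\mathcal B\to\mathcal Z$, the left $\chi$-coalgebra structures on $\mathrm N$ correspond bijectively to $\overline{\mathbb Q}$-opcoalgebra structures on $\mathrm{NF}=\mathrm{NVK}$.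
   Context: Juxtaposition denotes composition/whiskering, $\circ$ vertical composition. Lax morphism of comonads from $\mathbb C'$ to $\mathbb D$: $(\mathrm G,\sigma)$, $\sigma\colon\mathrm C'\mathrm G\Rightarrow\mathrm{GD}$, $\mathrm G\Delta^{\mathbb D}\circ\sigma=\sigma\mathrm D\circ\mathrm C'\sigma\circ\Delta^{\mathbb C'}\mathrm G$, $\mathrm G\varepsilon^{\mathbb D}\circ\sigma=\varepsilon^{\mathbb C'}\mathrm G$ (isomorphism if $\sigma$ invertible). A left $\chi$-coalgebra structure on $\mathrm N\colon\mathcal B\to\mathcal Z$ is $\lambda\colon\mathrm{NS}\Rightarrow\mathrm{NT}$ with $\mathrm N\Delta^{\mathbb T}\circ\lambda=\lambda\mathrm T\circ\mathrm N\chi\circ\lambda\mathrm S\circ\mathrm N\Delta^{\mathbb S}$ and $\mathrm N\varepsilon^{\mathbb T}\circ\lambda=\mathrm N\varepsilon^{\mathbb S}$. For a comonad $\mathbb D$ on a category $\mathcal D$, a $\mathbb D$-opcoalgebra structure on $\mathrm P\colon\mathcal D\to\mathcal Z$ is $\nabla\colon\mathrm P\Rightarrow\mathrm{PD}$ with $\mathrm P\Delta^{\mathbb D}\circ\nabla=\nabla\mathrm D\circ\nabla$ and $\mathrm P\varepsilon^{\mathbb D}\circ\nabla=\mathrm{id}_{\mathrm P}$. *)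

(* Defs.v *)
(* Natural transformations are represented by their families of components
   ([Trans]); naturality is a separate predicate ([natural]). *)
Set Implicit Arguments.
Unset Strict Implicit.

Record Category := {
  Ob :> Type;
  Hom : Ob -> Ob -> Type;
  idm : forall a, Hom a a;
  comp : forall a b c, Hom b c -> Hom a b -> Hom a c;
  comp_id_l : forall a b (f : Hom a b), comp (idm b) f = f;
  comp_id_r : forall a b (f : Hom a b), comp f (idm a) = f;
  comp_assoc : forall a b c d (h : Hom c d) (g : Hom b c) (f : Hom a b),
      comp h (comp g f) = comp (comp h g) f }.

Arguments Hom {_} _ _.
Arguments idm {_} _.
Arguments comp {_ _ _ _} _ _.
Notation "g ∘ f" := (comp g f) (at level 40, left associativity).

Record Functor (C D : Category) := {
  fobj :> C -> D;
  fmap : forall a b, Hom a b -> Hom (fobj a) (fobj b);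
  fmap_id : forall a, fmap (idm a) = idm (fobj a);
  fmap_comp : forall a b c (g : Hom b c) (f : Hom a b),
      fmap (g ∘ f) = fmap g ∘ fmap f }.
Arguments fmap {C D} _ {a b} _.

Definition IdF (C : Category) : Functor C C.
Proof.
  refine {| fobj := fun x => x; fmap := fun a b f => f |}; reflexivity.
Defined.

Definition FComp (C D E : Category) (G : Functor D E) (F : Functor C D) : Functor C E.
Proof.
  refine {| fobj := fun x => G (F x); fmap := fun a b f => fmap G (fmap F f) |}.
  - intro a; rewrite !fmap_id; reflexivity.
  - intros; rewrite !fmap_comp; reflexivity.
Defined.

Definition Trans (C D : Category) (F G : Functor C D) :=
  forall x : C, Hom (F x) (G x).

Definition natural (C D : Category) (F G : Functor C D) (s : Trans F G) : Prop :=
  forall x y (f : Hom x y), fmap G f ∘ s x = s y ∘ fmap F f.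

Definition nat_iso (C D : Category) (F G : Functor C D) (s : Trans F G) (sinv : Trans G F) : Prop :=
  natural s /\ forall x, sinv x ∘ s x = idm _ /\ s x ∘ sinv x = idm _.

Definition is_iso (C : Category) (a b : C) (f : Hom a b) : Prop :=
  exists g : Hom b a, g ∘ f = idm a /\ f ∘ g = idm b.

Definition is_adjunction (C D : Category) (F : Functor C D) (U : Functor D C)
  (eta : Trans (IdF C) (FComp U F)) (eps : Trans (FComp F U) (IdF D)) : Prop :=
  natural eta /\ natural eps /\
  (forall a, eps (F a) ∘ fmap F (eta a) = idm (F a)) /\
  (forall b, fmap U (eps b) ∘ eta (U b) = idm (U b)).

Record ComonadData (C : Category) := {
  cfun :> Functor C C;
  cdelta : Trans cfun (FComp cfun cfun);
  ceps : Trans cfun (IdF C) }.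
Arguments cdelta {C} _ _.
Arguments ceps {C} _ _.

Definition is_comonad (C : Category) (D : ComonadData C) : Prop :=
  natural (cdelta D) /\ natural (ceps D) /\
  (forall x, cdelta D (D x) ∘ cdelta D x = fmap D (cdelta D x) ∘ cdelta D x) /\
  (forall x, ceps D (D x) ∘ cdelta D x = idm (D x)) /\
  (forall x, fmap D (ceps D x) ∘ cdelta D x = idm (D x)).

Definition adj_comonad (C D : Category) (F : Functor C D) (U : Functor D C)
  (eta : Trans (IdF C) (FComp U F)) (eps : Trans (FComp F U) (IdF D)) : ComonadData D :=
  {| cfun := FComp F U;
     cdelta := fun b => fmap F (eta (U b));
     ceps := eps |}.

Definition lax_morphism (X Y : Category) (C' : ComonadData X) (D : ComonadData Y)
  (G : Functor Y X) (s : Trans (FComp C' G) (FComp G D)) : Prop :=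
  natural s /\
  (forall y, fmap G (cdelta D y) ∘ s y = s (D y) ∘ fmap C' (s y) ∘ cdelta C' (G y)) /\
  (forall y, fmap G (ceps D y) ∘ s y = ceps C' (G y)).

Definition mate (A B : Category) (F : Functor A B) (U : Functor B A)
  (eta : Trans (IdF A) (FComp U F)) (eps : Trans (FComp F U) (IdF B))
  (Cf : Functor A A) (S : Functor B B) (Om : Trans (FComp Cf U) (FComp U S))
  : Trans (FComp F Cf) (FComp S F) :=
  fun a => eps (S (F a)) ∘ fmap F (Om (F a)) ∘ fmap F (fmap Cf (eta a)).

Definition twist (A B : Category) (F : Functor A B) (U : Functor B A)
  (eta : Trans (IdF A) (FComp U F)) (eps : Trans (FComp F U) (IdF B))
  (Cf : Functor A A) (S : Functor B B) (Om : Trans (FComp Cf U) (FComp U S))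
  (Ominv : Trans (FComp U S) (FComp Cf U))
  : Trans (FComp (FComp F U) S) (FComp S (FComp F U)) :=
  fun b => mate eta eps Om (U b) ∘ fmap F (Ominv b).

Definition Qbar (A C : Category) (K : Functor A C) (Kb : Functor C A)
  (Q : ComonadData C) (xiinv : Trans (IdF C) (FComp K Kb))
  (phiinv : Trans (FComp Kb K) (IdF A)) : ComonadData A :=
  {| cfun := FComp Kb (FComp Q K);
     cdelta := fun a => fmap Kb (fmap Q (xiinv (Q (K a)))) ∘ fmap Kb (cdelta Q (K a));
     ceps := fun a => phiinv a ∘ fmap Kb (ceps Q (K a)) |}.

Definition left_coalg (B Z : Category) (S T : ComonadData B)
  (chi : Trans (FComp T S) (FComp S T)) (N : Functor B Z)
  (l : Trans (FComp N S) (FComp N T)) : Prop :=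
  natural l /\
  (forall b, fmap N (cdelta T b) ∘ l b
             = l (T b) ∘ fmap N (chi b) ∘ l (S b) ∘ fmap N (cdelta S b)) /\
  (forall b, fmap N (ceps T b) ∘ l b = fmap N (ceps S b)).

Definition opcoalg (D Z : Category) (Dm : ComonadData D) (P : Functor D Z)
  (nb : Trans P (FComp P Dm)) : Prop :=
  natural nb /\
  (forall a, fmap P (cdelta Dm a) ∘ nb a = nb (Dm a) ∘ nb a) /\
  (forall a, fmap P (ceps Dm a) ∘ nb a = idm (P a)).

Definition in_bijection (X Y : Type) : Prop :=
  exists (f : X -> Y) (g : Y -> X), (forall x, g (f x) = x) /\ (forall y, f (g y) = y).

Arguments is_adjunction {C D} F U eta eps.
Arguments lax_morphism {X Y} C' D G s.
Arguments left_coalg {B Z} S T chi N l.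
Arguments opcoalg {D Z} Dm P nb.

(* Main.v *)
Require Import Defs.
From Stdlib Require Import FunctionalExtensionality ProofIrrelevance IndefiniteDescription.

Lemma ext2 (C : Category) (b c d : C) (f : Hom c d) (g : Hom b c) (r : Hom b d) :
  f ∘ g = r -> forall e (h : Hom e b), f ∘ (g ∘ h) = r ∘ h.
Proof. intros E e h. rewrite comp_assoc, E. reflexivity. Qed.
Lemma ext3 (C : Category) (a b c d : C) (f : Hom c d) (g : Hom b c) (k : Hom a b) (r : Hom a d) :
  f ∘ (g ∘ k) = r -> forall e (h : Hom e a), f ∘ (g ∘ (k ∘ h)) = r ∘ h.
Proof. intros E e h. rewrite (comp_assoc g k h), comp_assoc, E. reflexivity. Qed.
Lemma ext4 (C : Category) (a0 a b c d : C) (f : Hom c d) (g : Hom b c) (k : Hom a b) (m : Hom a0 a) (r : Hom a0 d) :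
  f ∘ (g ∘ (k ∘ m)) = r -> forall e (h : Hom e a0), f ∘ (g ∘ (k ∘ (m ∘ h))) = r ∘ h.
Proof. intros E e h. rewrite (comp_assoc k m h). apply ext3. exact E. Qed.
Lemma ext5 (C : Category) (a1 a0 a b c d : C) (f : Hom c d) (g : Hom b c) (k : Hom a b) (m : Hom a0 a) (n : Hom a1 a0) (r : Hom a1 d) :
  f ∘ (g ∘ (k ∘ (m ∘ n))) = r -> forall e (h : Hom e a1), f ∘ (g ∘ (k ∘ (m ∘ (n ∘ h)))) = r ∘ h.
Proof. intros E e h. rewrite (comp_assoc m n h). apply ext4. exact E. Qed.

Arguments ext2 {C b c d f g r} E {e} h.
Arguments ext3 {C a b c d f g k r} E {e} h.
Arguments ext4 {C a0 a b c d f g k m r} E {e} h.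
Arguments ext5 {C a1 a0 a b c d f g k m n r} E {e} h.
Ltac rn := repeat rewrite <- comp_assoc.
Ltac rnin E := repeat rewrite <- comp_assoc in E.
Ltac idsimp := rewrite ?comp_id_l, ?comp_id_r.
Ltac nrm := simpl; rewrite ?fmap_comp, ?fmap_id; rn; idsimp.
Ltac nrmin E := simpl in E; rewrite ?fmap_comp, ?fmap_id in E; rnin E; rewrite ?comp_id_l, ?comp_id_r in E.
Ltac rw E := first [rewrite E | rewrite (ext2 E) | rewrite (ext3 E) | rewrite (ext4 E) | rewrite (ext5 E)]; rn; idsimp.
Ltac rwb E := let E' := fresh in pose proof (eq_sym E) as E'; rw E'; clear E'.
Ltac fm P E := apply (f_equal (fmap P)) in E; nrmin E.

Lemma inv_natural (C D : Category) (F G : Functor C D) (s : Trans F G) (si : Trans G F) :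
  nat_iso s si -> natural si.
Proof.
  intros [Hn Hi] x y f.
  destruct (Hi x) as [H1 H2]. destruct (Hi y) as [H3 H4].
  rewrite <- (comp_id_l (fmap F f ∘ si x)).
  rewrite <- H3. rn. pose proof (Hn x y f) as E. idtac. rwb E. rw H2. reflexivity.
Qed.

Lemma bij_gen (X Y : Type) (PX : X -> Prop) (PY : Y -> Prop) (f : X -> Y) (g : Y -> X) :
  (forall x, PX x -> PY (f x)) -> (forall y, PY y -> PX (g y)) ->
  (forall x, PX x -> g (f x) = x) -> (forall y, PY y -> f (g y) = y) ->
  in_bijection {x | PX x} {y | PY y}.
Proof.
  intros H1 H2 H3 H4.
  exists (fun x => exist _ (f (proj1_sig x)) (H1 _ (proj2_sig x))).
  exists (fun y => exist _ (g (proj1_sig y)) (H2 _ (proj2_sig y))).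
  split.
  - intros [x p]. simpl. apply eq_sig_hprop. intros; apply proof_irrelevance. simpl. auto.
  - intros [y p]. simpl. apply eq_sig_hprop. intros; apply proof_irrelevance. simpl. auto.
Qed.

Lemma bij_trans (X Y W : Type) : in_bijection X Y -> in_bijection Y W -> in_bijection X W.
Proof.
  intros [f [g [H1 H2]]] [f' [g' [H3 H4]]].
  exists (fun x => f' (f x)), (fun w => g (g' w)). split; intros.
  - rewrite H3. auto. - rewrite H2. auto.
Qed.

Ltac gnat H f := let E := fresh "E" in pose proof (H _ _ f) as E; nrmin E; rw E; clear E.
Ltac gnatb H f := let E := fresh "E" in pose proof (H _ _ f) as E; nrmin E; rwb E; clear E.
Ltac gnatP P H f := let E := fresh "E" in pose proof (H _ _ f) as E; nrmin E; fm P E; rw E; clear E.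
Ltac gnatPb P H f := let E := fresh "E" in pose proof (H _ _ f) as E; nrmin E; fm P E; rwb E; clear E.
Ltac rwn H := let E := fresh "E" in pose proof H as E; nrmin E; rw E; clear E.
Ltac rwnb H := let E := fresh "E" in pose proof H as E; nrmin E; rwb E; clear E.
Lemma cancel_l (C : Category) (a b c : C) (m : Hom b c) (mi : Hom c b) (x y : Hom a b) :
  mi ∘ m = idm b -> m ∘ x = m ∘ y -> x = y.
Proof.
  intros H1 H2. rewrite <- (comp_id_l x), <- (comp_id_l y), <- H1, <- !comp_assoc, H2. reflexivity.
Qed.
Lemma cancel_r (C : Category) (a b c : C) (m : Hom a b) (mi : Hom b a) (x y : Hom b c) :
  m ∘ mi = idm b -> x ∘ m = y ∘ m -> x = y.
Proof.
  intros H1 H2. rewrite <- (comp_id_r x), <- (comp_id_r y), <- H1, !comp_assoc, H2. reflexivity.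
Qed.

Lemma part2 (A Cc Z : Category) (K : Functor A Cc) (Kb : Functor Cc A) (P : Functor Cc Z)
  (Q : ComonadData Cc) (HQ : is_comonad Q)
  (phi : Trans (IdF A) (FComp Kb K)) (phiinv : Trans (FComp Kb K) (IdF A))
  (xi : Trans (FComp K Kb) (IdF Cc)) (xiinv : Trans (IdF Cc) (FComp K Kb))
  (HKadj : is_adjunction K Kb phi xi)
  (Hphi : nat_iso phi phiinv) (Hxi : nat_iso xi xiinv) :
  in_bijection {nb : Trans P (FComp P Q) | opcoalg Q P nb}
    {nb : Trans (FComp P K) (FComp (FComp P K) (Qbar Q xiinv phiinv))
      | opcoalg (Qbar Q xiinv phiinv) (FComp P K) nb}.
Proof.
  destruct HQ as [HdN [HeN _]].
  destruct HKadj as [Hphin [Hxin [Htri1 Htri2]]].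
  assert (Hxiinvn : natural xiinv) by (eapply inv_natural; exact Hxi).
  destruct Hxi as [_ Hxii]. destruct Hphi as [_ Hphii].
  assert (Kphi : forall a, fmap K (phi a) = xiinv (K a)).
  { intro a. destruct (Hxii (K a)) as [X1 X2]. simpl in X1.
    transitivity (xiinv (K a) ∘ xi (K a) ∘ fmap K (phi a)).
    { simpl. rewrite X1. rewrite comp_id_l. reflexivity. }
    pose proof (Htri1 a) as T1. nrmin T1. nrm. rw T1. reflexivity. }
  assert (Kphiinv : forall a, fmap K (phiinv a) ∘ xiinv (K a) = idm (K a)).
  { intro a. rewrite <- Kphi. simpl. rewrite <- fmap_comp. destruct (Hphii a) as [X1 _].
    simpl in X1. rewrite X1. apply fmap_id. }
  assert (XX : forall c, fmap P (xi c) ∘ fmap P (xiinv c) = idm (P c)).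
  { intro c. destruct (Hxii c) as [_ X2]. rewrite <- fmap_comp. simpl in X2. simpl. rewrite X2. apply fmap_id. }
  assert (XX' : forall c, fmap P (xiinv c) ∘ fmap P (xi c) = idm (P (K (Kb c)))).
  { intro c. destruct (Hxii c) as [X1 _]. rewrite <- fmap_comp. simpl in X1. simpl. rewrite X1. apply fmap_id. }
  pose (f2 := fun (nb : Trans P (FComp P Q)) =>
     (fun a => fmap P (xiinv (Q (K a))) ∘ nb (K a))
     : Trans (FComp P K) (FComp (FComp P K) (Qbar Q xiinv phiinv))).
  pose (g2 := fun (nb : Trans (FComp P K) (FComp (FComp P K) (Qbar Q xiinv phiinv))) =>
     (fun c => fmap P (fmap Q (xi c)) ∘ fmap P (xi (Q (K (Kb c)))) ∘ nb (Kb c) ∘ fmap P (xiinv c))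
     : Trans P (FComp P Q)).
  assert (Nf : forall nb, natural nb -> natural (f2 nb)).
  { intros nb Hn a a' h. unfold f2. nrm.
    gnatP P Hxiinvn (fmap Q (fmap K h)). gnat Hn (fmap K h). reflexivity. }
  assert (Ng : forall nb, natural nb -> natural (g2 nb)).
  { intros nb Hn c c' h. unfold g2. nrm.
    pose proof (Hxin _ _ h) as E. nrmin E. fm Q E. fm P E. rw E. clear E.
    gnatP P Hxin (fmap Q (fmap K (fmap Kb h))). gnat Hn (fmap Kb h).
    gnatP P Hxiinvn h. reflexivity. }
  assert (Hgf : forall nb, natural nb -> g2 (f2 nb) = nb).
  { intros nb Hn. apply functional_extensionality_dep; intro c. unfold g2, f2. nrm.
    rwn (XX (Q (K (Kb c)))). gnat Hn (xi c). rwn (XX c). reflexivity. }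
  assert (Hfg : forall nb, natural nb -> f2 (g2 nb) = nb).
  { intros nb Hn. apply functional_extensionality_dep; intro a. unfold g2, f2. nrm.
    rwnb (Kphi a). gnatb Hn (phi a). gnatPb P Hxin (fmap Q (fmap K (phi a))).
    pose proof (Htri1 a) as E. nrmin E. fm Q E. fm P E. rw E. clear E.
    rwn (XX' (Q (K a))). reflexivity. }
  assert (CuE : forall nb, natural nb -> forall a,
     fmap (FComp P K) (ceps (Qbar Q xiinv phiinv) a) ∘ f2 nb a = fmap P (ceps Q (K a)) ∘ nb (K a)).
  { intros nb Hn a. unfold f2. nrm. gnatP P Hxiinvn (ceps Q (K a)).
    pose proof (Kphiinv a) as E. nrmin E. fm P E. rw E. reflexivity. }
  assert (CoE : forall nb, natural nb -> forall a,
     fmap (FComp P K) (cdelta (Qbar Q xiinv phiinv) a) ∘ f2 nb a = f2 nb (Qbar Q xiinv phiinv a) ∘ f2 nb a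
     <-> fmap P (cdelta Q (K a)) ∘ nb (K a) = nb (Q (K a)) ∘ nb (K a)).
  { intros nb Hn a. unfold f2. nrm.
    gnatP P Hxiinvn (cdelta Q (K a)). gnatP P Hxiinvn (fmap Q (xiinv (Q (K a)))).
    gnatb Hn (xiinv (Q (K a))). split; intro H.
    - apply cancel_l with (m := fmap P (fmap Q (xiinv (Q (K a))))) (mi := fmap P (fmap Q (xi (Q (K a))))).
      { pose proof (proj2 (Hxii (Q (K a)))) as E. nrmin E. fm Q E. fm P E. nrm. rw E. reflexivity. }
      apply cancel_l with (m := fmap P (xiinv (Q (K (Kb (Q (K a))))))) (mi := fmap P (xi (Q (K (Kb (Q (K a))))))).
      { nrm. rwn (XX (Q (K (Kb (Q (K a)))))). reflexivity. }
      nrm. exact H.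
    - rewrite H. reflexivity. }
  assert (TrC : forall nb : Trans P (FComp P Q), natural nb -> (forall a, fmap P (ceps Q (K a)) ∘ nb (K a) = idm (P (K a))) ->
     forall c, fmap P (ceps Q c) ∘ nb c = idm (P c)).
  { intros nb Hn H c. apply cancel_r with (m := fmap P (xi c)) (mi := fmap P (xiinv c)).
    { nrm. rwn (XX c). reflexivity. }
    nrm. gnatb Hn (xi c). gnatPb P HeN (xi c). rwn (H (Kb c)). reflexivity. }
  assert (TrD : forall nb : Trans P (FComp P Q), natural nb ->
     (forall a, fmap P (cdelta Q (K a)) ∘ nb (K a) = nb (Q (K a)) ∘ nb (K a)) ->
     forall c, fmap P (cdelta Q c) ∘ nb c = nb (Q c) ∘ nb c).
  { intros nb Hn H c. apply cancel_r with (m := fmap P (xi c)) (mi := fmap P (xiinv c)).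
    { nrm. rwn (XX c). reflexivity. }
    nrm. gnatb Hn (xi c). gnatPb P HdN (xi c). gnatb Hn (fmap Q (xi c)). rwn (H (Kb c)). reflexivity. }
  apply (bij_gen _ _ _ _ f2 g2).
  - intros nb [Hn [Hc He]]. split; [now apply Nf | split].
    + intro a. apply (proj2 (CoE nb Hn a)). apply Hc.
    + intro a. transitivity (fmap P (ceps Q (K a)) ∘ nb (K a)). exact (CuE nb Hn a). apply He.
  - intros nb' [Hn [Hc He]]. pose proof (Ng _ Hn) as Hng.
    rewrite <- (Hfg _ Hn) in Hc, He. split; [exact Hng | split].
    + apply TrD; [exact Hng|]. intro a. apply (proj1 (CoE _ Hng a)). apply Hc.
    + apply TrC; [exact Hng|]. intro a.
      transitivity (fmap (FComp P K) (ceps (Qbar Q xiinv phiinv) a) ∘ f2 (g2 nb') a).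
      symmetry. apply CuE. exact Hng. apply He.
  - intros nb [Hn _]. apply Hgf; exact Hn.
  - intros nb' [Hn _]. apply Hfg; exact Hn.
Qed.

Lemma part1 (B Cc Z : Category) (V : Functor Cc B) (G : Functor B Cc)
  (eta' : Trans (IdF Cc) (FComp G V)) (eps' : Trans (FComp V G) (IdF B))
  (Hadj' : is_adjunction V G eta' eps')
  (T : ComonadData B) (Q : ComonadData Cc) (HQ : is_comonad Q)
  (Omt : Trans (FComp Q G) (FComp G T)) (Omtinv : Trans (FComp G T) (FComp Q G))
  (HOmt : nat_iso Omt Omtinv) (HOmtlax : lax_morphism Q T G Omt)
  (Linv : Trans (FComp T V) (FComp V Q))
  (HL : forall c, Linv c ∘ mate eta' eps' Omt c = idm _ /\ mate eta' eps' Omt c ∘ Linv c = idm _)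
  (chi : Trans (FComp T (adj_comonad eta' eps')) (FComp (adj_comonad eta' eps') T))
  (Hchi : forall b, chi b ∘ twist eta' eps' Omt Omtinv b = idm _)
  (N : Functor B Z) :
  in_bijection
    {l : Trans (FComp N (adj_comonad eta' eps')) (FComp N T)
      | left_coalg (adj_comonad eta' eps') T chi N l}
    {nb : Trans (FComp N V) (FComp (FComp N V) Q) | opcoalg Q (FComp N V) nb}.
Proof.
  destruct HQ as [HdN [HeN _]].
  destruct Hadj' as [Hetan [Hepsn [Tri1 Tri2]]].
  destruct HOmt as [Omtn Omti].
  destruct HOmtlax as [_ [Hlaxd Hlaxe]].
  assert (Mn : natural (mate eta' eps' Omt)).
  { intros c c' f. unfold mate. nrm.
    gnat Hepsn (fmap T (fmap V f)). gnatP V Omtn (fmap V f).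
    pose proof (Hetan _ _ f) as E. nrmin E. fm Q E. fm V E. rw E. clear E. reflexivity. }
  assert (HLn : natural Linv).
  { apply inv_natural with (s := mate eta' eps' Omt). split; [exact Mn | exact HL]. }
  assert (L1 : forall b, fmap T (eps' b) ∘ mate eta' eps' Omt (G b) = eps' (T b) ∘ fmap V (Omt b)).
  { intro b. unfold mate. nrm. gnat Hepsn (fmap T (eps' b)). gnatP V Omtn (eps' b).
    pose proof (Tri2 b) as E. nrmin E. fm Q E. fm V E. rw E. reflexivity. }
  assert (L4a : forall c, fmap G (mate eta' eps' Omt c) ∘ eta' (Q c) = Omt (V c) ∘ fmap Q (eta' c)).
  { intro c. unfold mate. nrm. gnat Hetan (fmap Q (eta' c)). gnat Hetan (Omt (V c)).
    rwn (Tri2 (T (V c))). reflexivity. }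
  assert (L4 : forall c, fmap T (mate eta' eps' Omt c) ∘ mate eta' eps' Omt (Q c) =
     eps' (T (T (V c))) ∘ (fmap V (Omt (T (V c))) ∘ (fmap V (fmap Q (Omt (V c))) ∘ fmap V (fmap Q (fmap Q (eta' c)))))).
  { intro c. transitivity (fmap T (mate eta' eps' Omt c) ∘
       (eps' (T (V (Q c))) ∘ fmap V (Omt (V (Q c))) ∘ fmap V (fmap Q (eta' (Q c))))); [reflexivity|].
    nrm. gnat Hepsn (fmap T (mate eta' eps' Omt c)). gnatP V Omtn (mate eta' eps' Omt c).
    pose proof (L4a c) as E. nrmin E. fm Q E. fm V E. rw E. reflexivity. }
  assert (L6 : forall b, chi b ∘ (eps' (T (V (G b))) ∘ (fmap V (Omt (V (G b))) ∘ fmap V (fmap Q (eta' (G b))))) = fmap V (Omt b)).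
  { intro b. transitivity (chi b ∘ (eps' (T (V (G b))) ∘ (fmap V (Omt (V (G b))) ∘ (fmap V (fmap Q (eta' (G b))) ∘ (fmap V (Omtinv b) ∘ fmap V (Omt b)))))).
    { pose proof (proj1 (Omti b)) as E. nrmin E. fm V E. nrm. rw E. reflexivity. }
    pose proof (Hchi b) as E. unfold twist, mate in E. nrmin E. nrm. rw E. reflexivity. }
  pose (Phi := fun (nb : Trans (FComp N V) (FComp (FComp N V) Q)) =>
     (fun b => fmap N (eps' (T b)) ∘ fmap N (fmap V (Omt b)) ∘ nb (G b))
     : Trans (FComp N (adj_comonad eta' eps')) (FComp N T)).
  pose (Psi := fun (l : Trans (FComp N (adj_comonad eta' eps')) (FComp N T)) =>
     (fun c => fmap N (Linv c) ∘ l (V c) ∘ fmap N (fmap V (eta' c)))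
     : Trans (FComp N V) (FComp (FComp N V) Q)).
  assert (NPhi : forall nb, natural nb -> natural (Phi nb)).
  { intros nb Hn b b' f. unfold Phi. nrm. gnatP N Hepsn (fmap T f).
    pose proof (Omtn _ _ f) as E. nrmin E. fm V E. fm N E. rw E. clear E.
    gnat Hn (fmap G f). reflexivity. }
  assert (NPsi : forall l, natural l -> natural (Psi l)).
  { intros l Hl c c' f. unfold Psi. nrm. gnatP N HLn f. gnat Hl (fmap V f).
    pose proof (Hetan _ _ f) as E. nrmin E. fm V E. fm N E. rw E. clear E. reflexivity. }
  assert (R1 : forall nb, natural nb -> Psi (Phi nb) = nb).
  { intros nb Hn. apply functional_extensionality_dep; intro c. unfold Psi, Phi. nrm.
    gnatb Hn (eta' c). pose proof (proj1 (HL c)) as E. unfold mate in E. nrmin E. fm N E. rw E.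
    reflexivity. }
  assert (R2 : forall l, natural l -> Phi (Psi l) = l).
  { intros l Hl. apply functional_extensionality_dep; intro b. unfold Psi, Phi. nrm.
    pose proof (L1 b) as E. nrmin E. fm N E. rwb E. clear E.
    pose proof (proj2 (HL (G b))) as E. nrmin E. fm N E. rw E. clear E.
    gnat Hl (eps' b).
    pose proof (Tri2 b) as E. nrmin E. fm V E. fm N E. rw E. reflexivity. }
  assert (CuE1 : forall nb, natural nb -> forall b, fmap N (ceps T b) ∘ Phi nb b =
      fmap N (eps' b) ∘ (fmap N (fmap V (ceps Q (G b))) ∘ nb (G b))).
  { intros nb Hn b. unfold Phi. nrm. gnatP N Hepsn (ceps T b).
    pose proof (Hlaxe b) as E. nrmin E. fm V E. fm N E. rw E. reflexivity. }
  assert (Tr1 : forall nb : Trans (FComp N V) (FComp (FComp N V) Q), natural nb ->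
     (forall b, fmap N (eps' b) ∘ (fmap N (fmap V (ceps Q (G b))) ∘ nb (G b)) = fmap N (eps' b)) ->
     forall c, fmap N (fmap V (ceps Q c)) ∘ nb c = idm (N (V c))).
  { intros nb Hn H c.
    transitivity (fmap N (eps' (V c)) ∘ (fmap N (fmap V (ceps Q (G (V c)))) ∘ nb (G (V c))) ∘ fmap N (fmap V (eta' c))).
    - nrm. gnatb Hn (eta' c). pose proof (HeN _ _ (eta' c)) as E. nrmin E. fm V E. fm N E. rwb E. clear E.
      pose proof (Tri1 c) as E. nrmin E. fm N E. rw E. reflexivity.
    - rewrite (H (V c)). nrm. pose proof (Tri1 c) as E. nrmin E. fm N E. rw E. reflexivity. }
  assert (CoL : forall nb, natural nb -> forall b, fmap N (cdelta T b) ∘ Phi nb b =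
      fmap N (eps' (T (T b))) ∘ (fmap N (fmap V (Omt (T b))) ∘ (fmap N (fmap V (fmap Q (Omt b)))
        ∘ (fmap N (fmap V (cdelta Q (G b))) ∘ nb (G b))))).
  { intros nb Hn b. unfold Phi. nrm. gnatP N Hepsn (cdelta T b).
    pose proof (Hlaxd b) as E. nrmin E. fm V E. fm N E. rw E. reflexivity. }
  assert (CoR : forall nb, natural nb -> forall b,
      Phi nb (T b) ∘ fmap N (chi b) ∘ Phi nb (V (G b)) ∘ fmap N (fmap V (eta' (G b))) =
      fmap N (eps' (T (T b))) ∘ (fmap N (fmap V (Omt (T b))) ∘ (fmap N (fmap V (fmap Q (Omt b)))
        ∘ (nb (Q (G b)) ∘ nb (G b))))).
  { intros nb Hn b. unfold Phi. nrm. gnatb Hn (eta' (G b)).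
    pose proof (L6 b) as E. nrmin E. fm N E. rw E. clear E.
    gnatb Hn (Omt b). reflexivity. }
  assert (Tr2 : forall nb : Trans (FComp N V) (FComp (FComp N V) Q), natural nb ->
     (forall b, fmap N (eps' (T (T b))) ∘ (fmap N (fmap V (Omt (T b))) ∘ (fmap N (fmap V (fmap Q (Omt b)))
        ∘ (fmap N (fmap V (cdelta Q (G b))) ∘ nb (G b)))) =
      fmap N (eps' (T (T b))) ∘ (fmap N (fmap V (Omt (T b))) ∘ (fmap N (fmap V (fmap Q (Omt b)))
        ∘ (nb (Q (G b)) ∘ nb (G b))))) ->
     forall c, fmap N (fmap V (cdelta Q c)) ∘ nb c = nb (Q c) ∘ nb c).
  { intros nb Hn H c.
    apply cancel_l with (m := fmap N (mate eta' eps' Omt (Q c))) (mi := fmap N (Linv (Q c))).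
    { pose proof (proj1 (HL (Q c))) as E. nrmin E. fm N E. nrm. rw E. reflexivity. }
    apply cancel_l with (m := fmap N (fmap T (mate eta' eps' Omt c))) (mi := fmap N (fmap T (Linv c))).
    { pose proof (proj1 (HL c)) as E. nrmin E. fm T E. fm N E. nrm. rw E. reflexivity. }
    nrm. pose proof (L4 c) as E. nrmin E. fm N E. rw E. rw E. clear E.
    pose proof (HdN _ _ (eta' c)) as E. nrmin E. fm V E. fm N E. rw E. clear E.
    gnat Hn (fmap Q (eta' c)). gnat Hn (eta' c).
    pose proof (H (V c)) as E. nrmin E. rw E. reflexivity. }
  apply (bij_gen _ _ _ _ Psi Phi).
  - intros l [Hl [Hc He]]. pose proof (NPsi _ Hl) as Hn.
    rewrite <- (R2 _ Hl) in Hc, He. split; [exact Hn | split].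
    + apply Tr2; [exact Hn|]. intro b.
      transitivity (fmap N (cdelta T b) ∘ Phi (Psi l) b). symmetry. apply CoL. exact Hn.
      etransitivity. apply Hc. apply CoR. exact Hn.
    + apply Tr1; [exact Hn|]. intro b.
      transitivity (fmap N (ceps T b) ∘ Phi (Psi l) b). symmetry. apply CuE1. exact Hn.
      apply He.
  - intros nb [Hn [Hc He]]. split; [now apply NPhi | split].
    + intro b. etransitivity. apply CoL. exact Hn.
      etransitivity. 2: { symmetry. apply CoR. exact Hn. }
      nrm. rwn (Hc (G b)). reflexivity.
    + intro b. etransitivity. apply CuE1. exact Hn. nrm. rwn (He (G b)). reflexivity.
  - intros l [Hl _]. apply R2; exact Hl.
  - intros nb [Hn _]. apply R1; exact Hn.
Qed.
Theorem corollary3p3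
  (A B Cc : Category)
  (V : Functor Cc B) (G : Functor B Cc) (K : Functor A Cc) (U : Functor B A)
  (* F := V K (strictly), F -| U *)
  (eta : Trans (IdF A) (FComp U (FComp V K)))
  (eps : Trans (FComp (FComp V K) U) (IdF B))
  (Hadj : is_adjunction (FComp V K) U eta eps)
  (* V -| G, S := comonad of this adjunction *)
  (eta' : Trans (IdF Cc) (FComp G V)) (eps' : Trans (FComp V G) (IdF B))
  (Hadj' : is_adjunction V G eta' eps')
  (* comonad C on A, S lifts C via Om *)
  (Cm : ComonadData A) (HC : is_comonad Cm)
  (Om : Trans (FComp Cm U) (FComp U (FComp V G)))
  (Ominv : Trans (FComp U (FComp V G)) (FComp Cm U))
  (HOm : nat_iso Om Ominv)
  (HOmlax : lax_morphism Cm (adj_comonad eta' eps') U Om)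
  (* comonad Q on Cc, (G, Omt) lax isomorphism from Q to T *)
  (Q : ComonadData Cc) (HQ : is_comonad Q)
  (Omt : Trans (FComp Q G) (FComp G (FComp (FComp V K) U)))
  (Omtinv : Trans (FComp G (FComp (FComp V K) U)) (FComp Q G))
  (HOmt : nat_iso Omt Omtinv)
  (HOmtlax : lax_morphism Q (adj_comonad eta eps) G Omt)
  (Hmate : forall c : Cc, is_iso (mate eta' eps' Omt c))
  (* K -| Kb with invertible unit phi and counit xi *)
  (Kb : Functor Cc A)
  (phi : Trans (IdF A) (FComp Kb K)) (phiinv : Trans (FComp Kb K) (IdF A))
  (xi : Trans (FComp K Kb) (IdF Cc)) (xiinv : Trans (IdF Cc) (FComp K Kb))
  (HKadj : is_adjunction K Kb phi xi)
  (Hphi : nat_iso phi phiinv) (Hxi : nat_iso xi xiinv)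
  (* chi = psi^{-1} *)
  (Hchipsi : forall b : B,
      twist eta eps Om Ominv b ∘ twist eta' eps' Omt Omtinv b = idm _ /\
      twist eta' eps' Omt Omtinv b ∘ twist eta eps Om Ominv b = idm _) :
  forall (Z : Category) (N : Functor B Z),
    in_bijection
      { l : Trans (FComp N (FComp V G)) (FComp N (FComp (FComp V K) U))
        | left_coalg (adj_comonad eta' eps') (adj_comonad eta eps)
                     (twist eta eps Om Ominv) N l }
      { nb : Trans (FComp N (FComp V K)) (FComp (FComp N (FComp V K)) (Qbar Q xiinv phiinv))
        | opcoalg (Qbar Q xiinv phiinv) (FComp N (FComp V K)) nb }.
Proof.
  intros Z N.
  pose (Linv := fun c => proj1_sig (constructive_indefinite_description _ (Hmate c))).
  assert (HL : forall c, Linv c ∘ mate eta' eps' Omt c = idm _ /\ mate eta' eps' Omt c ∘ Linv c = idm _).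
  { intro c. unfold Linv. destruct (constructive_indefinite_description _ (Hmate c)) as [g Hg]. exact Hg. }
  eapply bij_trans.
  - exact (part1 B Cc Z V G eta' eps' Hadj' (adj_comonad eta eps) Q HQ Omt Omtinv HOmt HOmtlax
             Linv HL (twist eta eps Om Ominv) (fun b => proj1 (Hchipsi b)) N).
  - exact (part2 A Cc Z K Kb (FComp N V) Q HQ phi phiinv xi xiinv HKadj Hphi Hxi).
Qed.
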